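(* For $n\ge 1$ let $Y_n$ be the random variable with \[ \mathbb{P}(Y_n=m)=\frac{[t^nx^m]H(t,x)}{[t^n]H(t,1)}. \] Then $Y_n/(2n)$ converges in law, with convergence of all moments, to a random variable $Y$ with the $\mathrm{Beta}(1,2)$ distribution, i.e. with density $f_Y(y)=2(1-y)$ for $y\in[0,1]$ and $0$ otherwise; its moments are $\mathbb{E}(Y^r)=\frac{2}{(r+1)(r+2)}$.
   Context: A bicolored Dyck path is a finite sequence of steps from $\{U_1,U_2,D\}$ ($U_1,U_2$ raise the height by $1$, $D$ lowers it by $1$) starting and ending at height $0$ and never going below height $0$; its length is its number of steps. Let $h_{n,m}$ be the number of pairs $(P,m)$ where $P$ is a bicolored Dyck path of length $2n$ with exactly one $U_2$ step, this being the $p$-th step of $P$, and $1\le m\le p$. Set $H(t,x)=\sum_{n,m}h_{n,m}t^nx^m$. (Equivalently, $Y_n$ is the value in the unique bottom-row cell of a uniformly random tableau with walls and holes of type $(n,n-1,1)$.) *)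

(* Defs.v *)
From Stdlib Require Import Reals List Arith Bool.
From Coquelicot Require Import Coquelicot.
Import ListNotations.
Open Scope R_scope.
Open Scope bool_scope.

(* Steps of a bicolored Dyck path. *)
Inductive step : Type := U1 | U2 | D.

Fixpoint words (k : nat) : list (list step) :=
  match k with
  | O => [ [] ]
  | S k' => flat_map (fun w => [U1 :: w; U2 :: w; D :: w]) (words k')
  end.

Fixpoint dyck_from (h : nat) (w : list step) : bool :=
  match w with
  | [] => Nat.eqb h 0
  | U1 :: w' => dyck_from (S h) w'
  | U2 :: w' => dyck_from (S h) w'
  | D :: w' => match h with O => false | S h' => dyck_from h' w' end
  end.

Definition is_dyck (w : list step) : bool := dyck_from 0 w.

Definition is_U2 (s : step) : bool := match s with U2 => true | _ => false end.

Definition count_U2 (w : list step) : nat := length (filter is_U2 w).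

(* 1-based position of the first U2 step (0 if none). *)
Fixpoint pos_U2 (w : list step) : nat :=
  match w with
  | [] => O
  | U2 :: _ => 1%nat
  | _ :: w' => S (pos_U2 w')
  end.

Definition h (n m : nat) : nat :=
  length (filter (fun w => is_dyck w && Nat.eqb (count_U2 w) 1
                           && Nat.leb 1 m && Nat.leb m (pos_U2 w))
                 (words (2 * n))).

(* [t^n] H(t,1) = sum_m h_{n,m}; m ranges over 1..2n since p <= 2n. *)
Definition htot (n : nat) : R := sum_f_R0 (fun m => INR (h n m)) (2 * n).

Definition probY (n m : nat) : R := INR (h n m) / htot n.

Definition expect_scaled (n : nat) (g : R -> R) : R :=
  sum_f_R0 (fun m => g (INR m / INR (2 * n)) * probY n m) (2 * n).

Definition fY (y : R) : R :=
  if Rle_dec 0 y then (if Rle_dec y 1 then 2 * (1 - y) else 0) else 0.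

(* Main.v *)
Require Import Defs.
From Stdlib Require Import Reals.
From Stdlib Require Import Lra Lia List Arith Bool.
Import ListNotations.
From Coquelicot Require Import Coquelicot.
Open Scope R_scope.


Fixpoint sumL (l : list R) : R := match l with [] => 0 | x :: l' => x + sumL l' end.

Lemma sumL_app l1 l2 : sumL (l1 ++ l2) = sumL l1 + sumL l2.
Proof. induction l1; simpl; [ring| rewrite IHl1; ring]. Qed.

Lemma sumL_flat_map {A B} (f : B -> R) (g : A -> list B) l :
  sumL (map f (flat_map g l)) = sumL (map (fun x => sumL (map f (g x))) l).
Proof. induction l; simpl; auto. rewrite map_app, sumL_app, IHl; auto. Qed.

Lemma sumL_ext {A} (f g : A -> R) l : (forall x, f x = g x) -> sumL (map f l) = sumL (map g l).
Proof. intros H; induction l; simpl; auto. rewrite H, IHl; auto. Qed.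

Lemma sumL_plus {A} (f g : A -> R) l : sumL (map (fun x => f x + g x) l) = sumL (map f l) + sumL (map g l).
Proof. induction l; simpl; [ring|rewrite IHl; ring]. Qed.

Lemma sumL_scal {A} (c : R) (f : A -> R) l : sumL (map (fun x => c * f x) l) = c * sumL (map f l).
Proof. induction l; simpl; [ring|rewrite IHl; ring]. Qed.

Lemma sumL_le {A} (f g : A -> R) l : (forall x, f x <= g x) -> sumL (map f l) <= sumL (map g l).
Proof. intros H; induction l; simpl; [lra|]. specialize (H a). lra. Qed.

Lemma sumL_zero {A} (l : list A) : sumL (map (fun _ => 0) l) = 0.
Proof. induction l; simpl; auto. rewrite IHl; ring. Qed.

Lemma length_filter_sumL {A} (p : A -> bool) l :
  INR (length (filter p l)) = sumL (map (fun x => if p x then 1 else 0) l).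
Proof. induction l; simpl; auto. destruct (p a); cbn [filter length map sumL]; rewrite ?S_INR, IHl; ring. Qed.

Definition Sg (k a : nat) (f : list step -> R) : R :=
  sumL (map (fun w => if dyck_from a w then f w else 0) (words k)).

Lemma Sg_S k a f : Sg (S k) a f =
  Sg k (S a) (fun w => f (U1 :: w)) + Sg k (S a) (fun w => f (U2 :: w)) +
  match a with O => 0 | S a' => Sg k a' (fun w => f (Defs.D :: w)) end.
Proof.
  unfold Sg; simpl words. rewrite sumL_flat_map.
  destruct a.
  - rewrite Rplus_0_r, <- sumL_plus. apply sumL_ext; intros w; simpl. ring.
  - rewrite <- sumL_plus, <- sumL_plus. apply sumL_ext; intros w; simpl. ring.
Qed.

Lemma Sg_0 a f : Sg 0 a f = if Nat.eqb a 0 then f [] else 0.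
Proof. unfold Sg; simpl. destruct (Nat.eqb a 0); ring. Qed.

Lemma Sg_ext k a f g : (forall w, f w = g w) -> Sg k a f = Sg k a g.
Proof. intros H; unfold Sg; apply sumL_ext; intros w; rewrite H; auto. Qed.

Lemma Sg_plus k a f g : Sg k a (fun w => f w + g w) = Sg k a f + Sg k a g.
Proof. unfold Sg; rewrite <- sumL_plus; apply sumL_ext; intros w; destruct dyck_from; ring. Qed.

Lemma Sg_scal k a c f : Sg k a (fun w => c * f w) = c * Sg k a f.
Proof. unfold Sg; rewrite <- sumL_scal; apply sumL_ext; intros w; destruct dyck_from; ring. Qed.

Lemma Sg_le k a f g : (forall w, f w <= g w) -> Sg k a f <= Sg k a g.
Proof. intros H; unfold Sg; apply sumL_le; intros w; destruct dyck_from; auto; lra. Qed.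

Lemma Sg_zero k a : Sg k a (fun _ => 0) = 0.
Proof. unfold Sg. transitivity (sumL (map (fun _ : list step => 0) (words k))).
  apply sumL_ext; intros w; destruct dyck_from; reflexivity. apply sumL_zero. Qed.

Lemma count_U1 w : count_U2 (U1 :: w) = count_U2 w. Proof. reflexivity. Qed.
Lemma count_U2' w : count_U2 (U2 :: w) = S (count_U2 w). Proof. reflexivity. Qed.
Lemma count_D w : count_U2 (Defs.D :: w) = count_U2 w. Proof. reflexivity. Qed.

Fixpoint ht (a : nat) (w : list step) (j : nat) : nat :=
  match j, w with
  | O, _ => a
  | S j', U1 :: w' => ht (S a) w' j'
  | S j', U2 :: w' => ht (S a) w' j'
  | S j', Defs.D :: w' => ht (pred a) w' j'
  | S _, [] => a
  end.

Definition Dd k a := Sg k a (fun w => if Nat.eqb (count_U2 w) 0 then 1 else 0).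
Definition Ff k a m := Sg k a (fun w => if Nat.eqb (count_U2 w) 1 && Nat.leb m (pos_U2 w) then 1 else 0).
Definition Aa k a j := Sg k a (fun w => if Nat.eqb (count_U2 w) 0 then INR (ht a w j) else 0).
Definition Yy k a j := Sg k a (fun w => if Nat.eqb (count_U2 w) 0 then INR (ht a w j) * (INR (ht a w j) + 2) else 0).

Definition Dm k a := match a with O => 0 | S a' => Dd k a' end.
Definition Fm k a m := match a with O => 0 | S a' => Ff k a' m end.
Definition Am k a j := match a with O => 0 | S a' => Aa k a' j end.
Definition Ym k a j := match a with O => 0 | S a' => Yy k a' j end.

Lemma Dd_S k a : Dd (S k) a = Dd k (S a) + Dm k a.
Proof.
  unfold Dd at 1. rewrite Sg_S; cbv beta.
  rewrite (Sg_ext k (S a) (fun w => if Nat.eqb (count_U2 (U2 :: w)) 0 then 1 else 0) (fun _ => 0))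
    by (intros w; reflexivity).
  rewrite Sg_zero. destruct a; simpl Dm; simpl Fm; simpl Am; simpl Ym; unfold Dd, count_U2; simpl; ring.
Qed.

Lemma Ff_S k a m : Ff (S k) a (S m) = Ff k (S a) m + (if Nat.eqb m 0 then Dd k (S a) else 0) + Fm k a m.
Proof.
  unfold Ff at 1. rewrite Sg_S; cbv beta.
  destruct m.
  - rewrite (Sg_ext k (S a) (fun w => if Nat.eqb (count_U2 (U2 :: w)) 1 && Nat.leb 1 (pos_U2 (U2 :: w)) then 1 else 0)
       (fun w => if Nat.eqb (count_U2 w) 0 then 1 else 0))
      by (intros w; simpl; rewrite andb_true_r; reflexivity).
    destruct a; simpl Dm; simpl Fm; simpl Am; simpl Ym; unfold Ff, Dd, count_U2; simpl; ring.
  - rewrite (Sg_ext k (S a) (fun w => if Nat.eqb (count_U2 (U2 :: w)) 1 && Nat.leb (S (S m)) (pos_U2 (U2 :: w)) then 1 else 0) (fun _ => 0))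
      by (intros w; simpl; rewrite andb_false_r; reflexivity).
    rewrite Sg_zero. destruct a; simpl Dm; simpl Fm; simpl Am; simpl Ym; unfold Ff, count_U2; simpl; ring.
Qed.

Lemma pos_U2_pos w : count_U2 w <> O -> (1 <= pos_U2 w)%nat.
Proof. induction w as [|s w IH]; [simpl; tauto|]. destruct s; simpl; try lia. Qed.

Lemma Ff_0_1 k a : Ff k a 0 = Ff k a 1.
Proof.
  unfold Ff; apply Sg_ext; intros w.
  destruct (Nat.eqb (count_U2 w) 1) eqn:E; simpl; auto.
  apply Nat.eqb_eq in E. assert (H := pos_U2_pos w). 
  destruct (pos_U2 w); [lia|reflexivity].
Qed.

Lemma ht_0 a w : ht a w 0 = a. Proof. destruct w; reflexivity. Qed.

Lemma Aa_0 k a : Aa k a 0 = INR a * Dd k a.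
Proof. unfold Aa, Dd. rewrite <- Sg_scal. apply Sg_ext; intros w; rewrite ht_0. destruct Nat.eqb; ring. Qed.

Lemma Yy_0 k a : Yy k a 0 = INR a * (INR a + 2) * Dd k a.
Proof. unfold Yy, Dd. rewrite <- Sg_scal. apply Sg_ext; intros w; rewrite ht_0. destruct Nat.eqb; ring. Qed.

Lemma Aa_S k a j : Aa (S k) a (S j) = Aa k (S a) j + Am k a j.
Proof.
  unfold Aa at 1. rewrite Sg_S; cbv beta.
  rewrite (Sg_ext k (S a) (fun w => if Nat.eqb (count_U2 (U2 :: w)) 0 then INR (ht a (U2 :: w) (S j)) else 0) (fun _ => 0))
    by (intros w; reflexivity).
  rewrite Sg_zero. destruct a; simpl Dm; simpl Fm; simpl Am; simpl Ym; unfold Aa, count_U2; simpl; ring.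
Qed.

Lemma Yy_S k a j : Yy (S k) a (S j) = Yy k (S a) j + Ym k a j.
Proof.
  unfold Yy at 1. rewrite Sg_S; cbv beta.
  rewrite (Sg_ext k (S a) (fun w => if Nat.eqb (count_U2 (U2 :: w)) 0 then INR (ht a (U2 :: w) (S j)) * (INR (ht a (U2 :: w) (S j)) + 2) else 0) (fun _ => 0))
    by (intros w; reflexivity).
  rewrite Sg_zero. destruct a; simpl Dm; simpl Fm; simpl Am; simpl Ym; unfold Yy, count_U2; simpl; ring.
Qed.

Lemma Dd_0 a : Dd 0 a = if Nat.eqb a 0 then 1 else 0.
Proof. unfold Dd; rewrite Sg_0. reflexivity. Qed.

Lemma Dd_nonneg k a : 0 <= Dd k a.
Proof. unfold Dd. apply Rle_trans with (Sg k a (fun _ => 0)); [rewrite Sg_zero; lra|]. apply Sg_le. intros w; destruct Nat.eqb; lra. Qed.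

Lemma Dd_diag a : 1 <= Dd a a.
Proof.
  induction a. rewrite Dd_0; simpl; lra.
  rewrite Dd_S; simpl Dm. pose proof (Dd_nonneg a (S (S a))). lra.
Qed.

Lemma Dd_pos i a : 1 <= Dd (a + 2 * i) a.
Proof.
  revert a; induction i; intros a.
  - replace (a + 2 * 0)%nat with a by lia. apply Dd_diag.
  - replace (a + 2 * S i)%nat with (S (S a + 2 * i)) by lia.
    rewrite Dd_S. destruct a; unfold Dm.
    + specialize (IHi 1%nat). lra.
    + specialize (IHi (S (S a))). pose proof (Dd_nonneg (S (S a) + 2 * i) a). lra.
Qed.

Lemma Main_id k : forall a m, (m <= k)%nat ->
  2 * Ff k a (S m) + Aa k a m = (INR k - INR m) * Dd k a.
Proof.
  induction k as [|k IH]; intros a m Hm.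
  - assert (m = 0%nat) by lia; subst. rewrite Aa_0, Dd_0.
    unfold Ff; rewrite Sg_0. destruct a; simpl; ring.
  - destruct m as [|m].
    + rewrite Ff_S, Aa_0, Dd_S. simpl Nat.eqb. cbv iota.
      assert (H1 := IH (S a) 0%nat (Nat.le_0_l _)).
      rewrite Aa_0, <- Ff_0_1 in H1.
      destruct a as [|a]; simpl Fm; simpl Dm.
      * rewrite S_INR in *. simpl INR in *. lra.
      * assert (H2 := IH a 0%nat (Nat.le_0_l _)).
        rewrite Aa_0, <- Ff_0_1 in H2. rewrite !S_INR in *. simpl INR in *. lra.
    + rewrite Ff_S, Aa_S, Dd_S. simpl Nat.eqb. cbv iota.
      assert (H1 := IH (S a) m ltac:(lia)).
      destruct a as [|a]; simpl Fm; simpl Dm; simpl Am.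
      * rewrite !S_INR in *. lra.
      * assert (H2 := IH a m ltac:(lia)). rewrite !S_INR in *. lra.
Qed.

Lemma Ratio k : forall a, INR a * (INR k + INR a + 3) * Dd k (S a) = (INR a + 2) * (INR k + 1 - INR a) * Dm k a.
Proof.
  induction k as [|k IH]; intros a.
  - rewrite Dd_0. destruct a as [|[|a]]; unfold Dm; rewrite ?Dd_0; simpl Nat.eqb; cbv iota.
    + ring.
    + simpl INR. ring.
    + ring.
  - destruct a as [|b].
    + simpl Dm. simpl INR. ring.
    + simpl Dm. rewrite !Dd_S. simpl Dm.
      assert (H1 := IH (S (S b))). simpl Dm in H1.
      assert (H2 := IH b).
      apply (Rmult_eq_reg_l (INR b + 2)); [|pose proof (pos_INR b); lra].
      rewrite !S_INR in *.
      set (X2 := Dd k (S (S (S b)))) in *.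
      set (X0 := Dd k (S b)) in *.
      set (Z := Dm k b) in *.
      set (bb := INR b) in *. set (kk := INR k) in *.
      assert (E1 := f_equal (Rmult (bb + 1)) H1).
      assert (E2 := f_equal (Rmult (bb + 1 + 2)) H2).
      lra.
Qed.

Lemma Yy_end k : forall a, Yy k a k = 0.
Proof.
  induction k as [|k IH]; intros a.
  - rewrite Yy_0, Dd_0. destruct a; simpl Nat.eqb; cbv iota; simpl INR; ring.
  - rewrite Yy_S, IH. destruct a; unfold Ym; rewrite ?IH; ring.
Qed.

Definition Rp (k a j : R) := a * (a + 2) * (k - j) * (k - j - 1) + 3 * j * k * (k - j).

Lemma Dd_1 b : Dd 1 b = if Nat.eqb b 1 then 1 else 0.
Proof. rewrite Dd_S, Dd_0. destruct b as [|[|b]]; unfold Dm; rewrite ?Dd_0; simpl; ring. Qed.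

Lemma Y_id k : forall a j, (j <= k)%nat ->
  INR k * (INR k - 1) * Yy k a j = Rp (INR k) (INR a) (INR j) * Dd k a.
Proof.
  induction k as [|k IH]; intros a j Hj.
  - assert (j = 0%nat) by lia; subst. unfold Rp. simpl INR. ring.
  - destruct j as [|j].
    + rewrite Yy_0. unfold Rp. simpl INR. ring.
    + rewrite Yy_S, Dd_S.
      destruct k as [|[|k0]].
      * assert (j = 0%nat) by lia; subst. unfold Rp. simpl INR. ring.
      * assert (j = 0%nat \/ j = 1%nat) as [-> | ->] by lia.
        -- rewrite Yy_0. destruct a as [|[|[|a]]]; unfold Ym, Dm; rewrite ?Yy_0, ?Dd_1; simpl Nat.eqb; cbv iota;
             unfold Rp; simpl INR; try ring.
        -- rewrite Yy_end. destruct a; unfold Ym; rewrite ?Yy_end; unfold Rp; simpl INR; ring.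
      * set (k := S (S k0)) in *.
        assert (Hk : INR k - 1 <> 0).
        { unfold k. rewrite !S_INR. pose proof (pos_INR k0). lra. }
        apply (Rmult_eq_reg_l (INR k - 1)); [|exact Hk].
        assert (Hjk : (j <= k)%nat) by (unfold k; lia). clearbody k. clear Hj.
        assert (H1 := IH (S a) j Hjk).
        assert (R1 := Ratio k a).
        destruct a as [|a].
        -- unfold Ym, Dm in *. unfold Rp in *. rewrite !S_INR in *. simpl INR in *.
           assert (E1 := f_equal (Rmult (INR k + 1)) H1).
           lra.
        -- unfold Ym, Dm in *.
           assert (H2 := IH a j Hjk).
           unfold Rp in *. rewrite !S_INR in *.
           set (X := Dd k (S (S a))) in *. set (Z := Dd k a) in *.
           set (Y1 := Yy k (S (S a)) j) in *. set (Y2 := Yy k a j) in *.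
           set (aa := INR a) in *. set (kk := INR k) in *. set (jj := INR j) in *.
           assert (E1 := f_equal (Rmult (kk + 1)) H1).
           assert (E2 := f_equal (Rmult (kk + 1)) H2).
           assert (E3 := f_equal (Rmult (2 * (kk - jj) * (kk - jj - 1))) R1).
           lra.
Qed.


Lemma map_iota_S (x : nat -> R) n : forall m,
  seq.map x (seq.iota (S m) n) = seq.map (fun i => x (S i)) (seq.iota m n).
Proof. induction n; intros m; simpl; auto. f_equal. apply IHn. Qed.

Lemma mkseq_S (x : nat -> R) n : seq.mkseq x (S n) = cons (x 0%nat) (seq.mkseq (fun i => x (S i)) n).
Proof. unfold seq.mkseq. simpl. f_equal. apply map_iota_S. Qed.

Lemma RS_mkseq (f : R -> R) K : forall (x : nat -> R),
  Riemann_sum f (SF_seq_f2 (fun _ y => y) (seq.mkseq x (S (S K)))) =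
  sum_f_R0 (fun j => (x (S j) - x j) * f (x (S j))) K.
Proof.
  induction K; intros x.
  - rewrite mkseq_S. rewrite SF_cons_f2 by (simpl; lia).
    rewrite Riemann_sum_cons. simpl. unfold plus, scal, zero; simpl. unfold mult; simpl. assert (Hz : Riemann_sum f (SF_seq_f2 (fun _ y => y) (seq.mkseq (fun i => x (S i)) 1)) = 0) by reflexivity. rewrite Hz. ring.
  - rewrite mkseq_S. rewrite SF_cons_f2 by (rewrite seq.size_mkseq; lia).
    rewrite Riemann_sum_cons. rewrite IHK.
    rewrite (decomp_sum _ (S K)) by lia. simpl pred.
    rewrite mkseq_S. simpl. unfold plus, scal; simpl. unfold mult; simpl. ring.
Qed.

Lemma RS_unif (f : R -> R) K :
  Riemann_sum f (SF_seq_f2 (fun _ y => y) (unif_part 0 1 K)) =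
  sum_f_R0 (fun j => f (INR (S j) / (INR K + 1)) / (INR K + 1)) K.
Proof.
  unfold unif_part. rewrite RS_mkseq. apply sum_eq; intros i _.
  assert (HK : INR K + 1 <> 0) by (pose proof (pos_INR K); lra).
  replace (0 + INR (S i) * (1 - 0) / (INR K + 1)) with (INR (S i) / (INR K + 1)) by (field; auto).
  rewrite S_INR. field. auto.
Qed.

Lemma riemann_lim (f : R -> R) : (forall x, continuous f x) ->
  is_lim_seq (fun K => sum_f_R0 (fun j => f (INR (S j) / (INR K + 1)) / (INR K + 1)) K) (RInt f 0 1).
Proof.
  intros Hc.
  assert (Hex : ex_RInt f 0 1) by (apply (@ex_RInt_continuous R_CompleteNormedModule); intros; apply Hc).
  pose proof (@RInt_correct R_CompleteNormedModule f 0 1 Hex) as HI.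
  apply is_lim_seq_spec. intros eps.
  unfold is_RInt in HI.
  assert (HI2 := proj1 (filterlim_locally _ _) HI eps).
  destruct HI2 as [delta Hd].
  destruct (nfloor_ex (/ delta)) as [N HN]. { pose proof (cond_pos delta). left. apply Rinv_0_lt_compat. lra. }
  exists N. intros K HK.
  pose proof (Riemann_fine_unif_part (fun _ y => y) 0 1 K) as HR.
  destruct HR as [Hs [Hp [Hh Hl]]]. { intros; lra. } { lra. }
  assert (Hstep : seq_step (SF_lx (SF_seq_f2 (fun _ y : R => y) (unif_part 0 1 K))) < delta).
  { eapply Rle_lt_trans; [exact Hs|].
    pose proof (cond_pos delta) as Hdp.
    assert (INR N <= INR K) by (apply le_INR; lia).
    assert (Hlt : / delta < INR K + 1) by lra.
    assert (Hpos : 0 < / delta) by (apply Rinv_0_lt_compat; lra).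
    rewrite Rminus_0_r. unfold Rdiv. rewrite Rmult_1_l.
    replace (pos delta) with (/ / delta) by (field; lra).
    apply Rinv_lt_contravar; [apply Rmult_lt_0_compat; lra| exact Hlt]. }
  specialize (Hd _ Hstep).
  assert (HD : pointed_subdiv (SF_seq_f2 (fun _ y : R => y) (unif_part 0 1 K)) /\
      SF_h (SF_seq_f2 (fun _ y : R => y) (unif_part 0 1 K)) = Rmin 0 1 /\
      seq.last (SF_h (SF_seq_f2 (fun _ y : R => y) (unif_part 0 1 K)))
        (SF_lx (SF_seq_f2 (fun _ y : R => y) (unif_part 0 1 K))) = Rmax 0 1).
  { rewrite Rmin_left, Rmax_right by lra. auto. }
  specialize (Hd HD).
  rewrite RS_unif in Hd.
  replace (sign (1 - 0)) with 1 in Hd by (rewrite Rminus_0_r; symmetry; apply sign_eq_1; lra).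
  change (scal 1 ?x) with (1 * x) in Hd. rewrite Rmult_1_l in Hd.
  apply Hd.
Qed.


Lemma h_eq n m : (1 <= m)%nat -> INR (h n m) = Ff (2 * n) 0 m.
Proof.
  intros Hm. unfold h, Ff, Sg. rewrite length_filter_sumL. apply sumL_ext. intros w.
  unfold is_dyck. destruct (Nat.leb 1 m) eqn:E; [|apply Nat.leb_nle in E; lia].
  destruct (dyck_from 0 w); simpl; auto. rewrite andb_true_r. reflexivity.
Qed.

Lemma h_0 n : h n 0 = 0%nat.
Proof.
  unfold h. induction (words (2 * n)); simpl; auto.
  rewrite !andb_false_r. simpl. auto.
Qed.

Definition Cn n := Dd (2 * n) 0.
Definition Aj n j := Aa (2 * n) 0 j.

Lemma Cn_pos n : 1 <= Cn n.
Proof. unfold Cn. pose proof (Dd_pos n 0). simpl plus in H. exact H. Qed.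

Lemma h_formula n j : (j < 2 * n)%nat ->
  INR (h n (S j)) = ((INR (2 * n) - INR j) * Cn n - Aj n j) / 2.
Proof.
  intros Hj. rewrite h_eq by lia. pose proof (Main_id (2 * n) 0 j ltac:(lia)) as H.
  unfold Cn, Aj. lra.
Qed.

Lemma Aj_nonneg n j : 0 <= Aj n j.
Proof.
  unfold Aj, Aa. apply Rle_trans with (Sg (2 * n) 0 (fun _ => 0)); [rewrite Sg_zero; lra|].
  apply Sg_le. intros w. destruct Nat.eqb; [apply pos_INR|lra].
Qed.

Lemma A_bound n j t : (1 <= n)%nat -> (j <= 2 * n)%nat -> 0 < t ->
  Aj n j <= (t + 3 * INR n / t) * Cn n.
Proof.
  intros Hn Hj Ht.
  assert (H1 : Aj n j <= t * Cn n + / t * Yy (2 * n) 0 j).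
  { unfold Aj, Cn, Aa, Yy, Dd. rewrite <- !Sg_scal, <- Sg_plus. apply Sg_le. intros w.
    destruct Nat.eqb; [|lra].
    set (x := INR (ht 0 w j)). assert (0 <= x) by apply pos_INR.
    assert (Hx : t * x <= t * t + x * (x + 2)) by nra.
    assert (E : t * (t * 1 + / t * (x * (x + 2))) = t * t + x * (x + 2)) by (field; lra).
    apply Rmult_le_reg_l with t; lra. }
  assert (HY0 : 0 <= Yy (2 * n) 0 j).
  { unfold Yy. apply Rle_trans with (Sg (2 * n) 0 (fun _ => 0)); [rewrite Sg_zero; lra|].
    apply Sg_le. intros w. destruct Nat.eqb; [|lra]. pose proof (pos_INR (ht 0 w j)). nra. }
  assert (HY : Yy (2 * n) 0 j <= 3 * INR n * Cn n).
  { pose proof (Y_id (2 * n) 0 j Hj) as HI. unfold Rp in HI. rewrite mult_INR in HI. simpl INR in HI.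
    assert (Hnr : 1 <= INR n) by (apply (le_INR 1); lia).
    assert (Hjr : INR j <= 2 * INR n) by (rewrite <- (mult_INR 2); apply le_INR; lia).
    pose proof (Cn_pos n) as HC. unfold Cn in *.
    set (Y := Yy (2 * n) 0 j) in *. set (C := Dd (2 * n) 0) in *.
    set (nn := INR n) in *. set (jj := INR j) in *.
    assert (HI2 : (2 * nn - 1) * Y = 3 * jj * (2 * nn - jj) * C).
    { apply Rmult_eq_reg_l with (2 * nn); [|lra]. lra. }
    assert (Hsq : 0 <= (nn - jj) * (nn - jj)) by apply Rle_0_sqr.
    assert (Hn2 : nn * 1 <= nn * nn) by (apply Rmult_le_compat_l; lra).
    assert (Hb : jj * (2 * nn - jj) <= nn * (2 * nn - 1)) by lra.
    assert (Hb2 : (2 * nn - 1) * Y <= (2 * nn - 1) * (3 * nn * C)) by nra.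
    apply Rmult_le_reg_l with (2 * nn - 1); lra. }
  assert (Hd : / t * Yy (2 * n) 0 j <= / t * (3 * INR n * Cn n)).
  { apply Rmult_le_compat_l; [left; apply Rinv_0_lt_compat; lra| exact HY]. }
  unfold Rdiv. lra.
Qed.

Lemma L1 c eps : 0 < eps -> eventually (fun n => c / INR n <= eps).
Proof.
  intros He.
  destruct (nfloor_ex (Rabs c / eps)) as [N HN].
  { apply Rmult_le_pos; [apply Rabs_pos| left; apply Rinv_0_lt_compat; lra]. }
  exists (S N). intros n Hn.
  assert (Hn' : INR N + 1 <= INR n) by (rewrite <- S_INR; apply le_INR; lia).
  assert (Hc : Rabs c < eps * INR n).
  { assert (Rabs c / eps < INR n) by lra.
    apply Rmult_lt_reg_l with (/ eps); [apply Rinv_0_lt_compat; lra|].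
    rewrite <- Rmult_assoc, Rinv_l by lra. lra. }
  assert (Hnp : 0 < INR n) by (pose proof (pos_INR N); lra).
  apply Rmult_le_reg_r with (INR n); [exact Hnp|].
  unfold Rdiv. rewrite Rmult_assoc, Rinv_l by lra.
  pose proof (Rle_abs c). lra.
Qed.

Lemma L2 (u : nat -> R) : (forall eps, 0 < eps -> eventually (fun n => Rabs (u n) <= eps)) -> is_lim_seq u 0.
Proof.
  intros H. apply is_lim_seq_spec. intros eps.
  destruct (H (eps / 2)) as [N HN]. { pose proof (cond_pos eps). lra. }
  exists N. intros n Hn. specialize (HN n Hn). rewrite Rminus_0_r. pose proof (cond_pos eps). lra.
Qed.

Lemma ev_and (P Q : nat -> Prop) : eventually P -> eventually Q -> eventually (fun n => P n /\ Q n).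
Proof.
  intros [N1 H1] [N2 H2]. exists (max N1 N2). intros n Hn. split; [apply H1|apply H2]; lia.
Qed.

Lemma sum_lin3 a b c (u v w : nat -> R) K :
  sum_f_R0 (fun i => a * u i + b * v i + c * w i) K =
  a * sum_f_R0 u K + b * sum_f_R0 v K + c * sum_f_R0 w K.
Proof. induction K; simpl; [ring| rewrite IHK; ring]. Qed.

Lemma sum_count c K : sum_f_R0 (fun i => c - INR i) K = (INR K + 1) * c - INR K * (INR K + 1) / 2.
Proof. induction K; cbn [sum_f_R0]; [rewrite INR_0; field|]. rewrite IHK, !S_INR. field. Qed.

Lemma sum_abs_bound (u : nat -> R) M K : (forall i, (i <= K)%nat -> Rabs (u i) <= M) ->
  Rabs (sum_f_R0 u K) <= M * (INR K + 1).
Proof.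
  intros H. eapply Rle_trans; [apply sum_f_R0_triangle|].
  eapply Rle_trans; [apply sum_Rle; intros i Hi; apply H; exact Hi|].
  rewrite sum_cte, S_INR. lra.
Qed.

Definition phi (g : R -> R) y := g y * (2 * (1 - y)).
Definition xj n j := INR (S j) / INR (2 * n).
Definition Kn n := pred (2 * n).
Definition Rs g n := sum_f_R0 (fun j => phi g (xj n j) / INR (2 * n)) (Kn n).
Definition Gs g n := sum_f_R0 (fun j => g (xj n j)) (Kn n).
Definition Ers g n := sum_f_R0 (fun j => g (xj n j) * Aj n j) (Kn n).
Definition Es n := sum_f_R0 (fun j => Aj n j) (Kn n).

Lemma Kn_INR n : (1 <= n)%nat -> INR (Kn n) + 1 = INR (2 * n).
Proof. intros Hn. unfold Kn. rewrite <- S_INR. f_equal. lia. Qed.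

Lemma N_pos n : (1 <= n)%nat -> 0 < INR (2 * n).
Proof. intros Hn. apply lt_0_INR. lia. Qed.

Lemma expect_eq g n : (1 <= n)%nat ->
  expect_scaled n g =
  ((Cn n * INR (2 * n) ^ 2 / 4) * Rs g n + (Cn n / 2) * Gs g n - Ers g n / 2) /
  ((Cn n / 2) * (INR (2 * n) * (INR (2 * n) + 1) / 2) - Es n / 2).
Proof.
  intros Hn.
  pose proof (N_pos n Hn) as HN. pose proof (Kn_INR n Hn) as HK.
  unfold expect_scaled, probY, htot.
  rewrite (decomp_sum _ (2 * n)) by lia.
  rewrite (decomp_sum (fun m => INR (h n m)) (2 * n)) by lia.
  rewrite h_0. simpl (INR 0). fold (Kn n).
  set (H := 0 + sum_f_R0 (fun i => INR (h n (S i))) (Kn n)).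
  assert (Hden : H = (Cn n / 2) * (INR (2 * n) * (INR (2 * n) + 1) / 2) - Es n / 2).
  { unfold H, Es. rewrite Rplus_0_l.
    rewrite (sum_eq _ (fun i => (Cn n / 2) * (INR (2 * n) - INR i) + (-1/2) * Aj n i + 0 * 0)).
    2:{ intros i Hi. cbv beta. rewrite h_formula by (unfold Kn in Hi; lia). field. }
    rewrite sum_lin3, sum_count. rewrite <- HK. change (sum_f_R0 (fun j : nat => Aj n j) (Kn n)) with (sum_f_R0 (Aj n) (Kn n)). field. }
  assert (Hnum : sum_f_R0 (fun i => g (INR (S i) / INR (2 * n)) * (INR (h n (S i)) / H)) (Kn n) =
     ((Cn n * INR (2 * n) ^ 2 / 4) * Rs g n + (Cn n / 2) * Gs g n - Ers g n / 2) / H).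
  { unfold Rdiv at 2. set (iH := / H).
    transitivity (iH * sum_f_R0 (fun i =>
       (Cn n * INR (2 * n) ^ 2 / 4) * (phi g (xj n i) / INR (2 * n)) + (Cn n / 2) * g (xj n i) + (-1/2) * (g (xj n i) * Aj n i)) (Kn n)).
    { rewrite scal_sum. apply sum_eq. intros i Hi. cbv beta.
      rewrite h_formula by (unfold Kn in Hi; lia). unfold phi, xj. unfold Rdiv at 2. fold iH.
      rewrite S_INR. field. lra. }
    rewrite sum_lin3. unfold Rs, Gs, Ers. unfold iH, Rdiv. ring. }
  rewrite Hnum. simpl (INR 0 / _). rewrite <- Hden.
  unfold Rdiv. ring.
Qed.

Lemma Es_bound n t : (1 <= n)%nat -> 0 < t ->
  0 <= Es n <= INR (2 * n) * ((t + 3 * INR n / t) * Cn n).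
Proof.
  intros Hn Ht. unfold Es. split.
  - apply Rle_trans with (sum_f_R0 (fun _ => 0) (Kn n)).
    + rewrite sum_cte; lra.
    + apply sum_Rle; intros; apply Aj_nonneg.
  - apply Rle_trans with (sum_f_R0 (fun _ => (t + 3 * INR n / t) * Cn n) (Kn n)).
    + apply sum_Rle; intros j Hj. apply A_bound; auto. unfold Kn in Hj; lia.
    + rewrite sum_cte, S_INR, (Kn_INR n Hn). lra.
Qed.

Definition en n := 2 * Es n / (Cn n * INR (2 * n) ^ 2).

Lemma en_nonneg n : (1 <= n)%nat -> 0 <= en n.
Proof.
  intros Hn. unfold en. pose proof (Es_bound n 1 Hn Rlt_0_1) as [H _].
  pose proof (Cn_pos n). pose proof (N_pos n Hn).
  apply Rmult_le_pos; [lra|]. left. apply Rinv_0_lt_compat. apply Rmult_lt_0_compat; [lra|]. apply pow_lt; lra.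
Qed.

Lemma en_small eps : 0 < eps -> eventually (fun n => (1 <= n)%nat /\ en n <= eps).
Proof.
  intros He.
  assert (H1 : eventually (fun n : nat => (1 <= n)%nat)) by (exists 1%nat; auto).
  pose proof (ev_and _ _ H1 (L1 (6 / eps) (eps / 2) ltac:(lra))) as H.
  destruct H as [N0 HN0]. exists N0. intros n Hn. destruct (HN0 n Hn) as [Hn1 Hb].
  split; auto.
  assert (Hnp : 1 <= INR n) by (apply (le_INR 1); lia).
  set (t := eps * INR n / 2).
  assert (Ht : 0 < t) by (unfold t; nra).
  destruct (Es_bound n t Hn1 Ht) as [_ HE].
  pose proof (Cn_pos n) as HC.
  unfold en. rewrite mult_INR in HE |- *. simpl (INR 2) in HE |- *.
  set (nn := INR n) in *. set (C := Cn n) in *. set (E := Es n) in *.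
  assert (Hb2 : 6 / eps <= eps / 2 * nn).
  { apply Rmult_le_reg_r with (/ nn). apply Rinv_0_lt_compat; lra.
    rewrite Rmult_assoc, Rinv_r by lra. unfold Rdiv in Hb |- *. lra. }
  assert (Ht2 : t + 3 * nn / t <= eps * nn).
  { unfold t. assert (3 * nn / (eps * nn / 2) = 6 / eps) by (field; lra). lra. }
  assert (HE2 : 2 * E <= eps * (C * ((1 + 1) * nn) ^ 2)).
  { assert (HCp : 0 <= (1 + 1) * nn * C) by nra.
    assert (H3 : (1 + 1) * nn * ((t + 3 * nn / t) * C) <= (1 + 1) * nn * ((eps * nn) * C)).
    { apply Rmult_le_compat_l; [nra|]. apply Rmult_le_compat_r; lra. }
    nra. }
  apply Rmult_le_reg_r with (C * ((1 + 1) * nn) ^ 2). { apply Rmult_lt_0_compat; [lra|]. apply pow_lt; lra. }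
  unfold Rdiv. rewrite Rmult_assoc, Rinv_l. lra. apply Rgt_not_eq. apply Rmult_lt_0_compat; [lra|]. apply pow_lt; lra.
Qed.

Lemma abs_div_le x B Dv : 0 < Dv -> Rabs x <= B -> Rabs (x / Dv) <= B / Dv.
Proof.
  intros HD Hx. unfold Rdiv. rewrite Rabs_mult, (Rabs_pos_eq (/ Dv)) by (left; apply Rinv_0_lt_compat; lra).
  apply Rmult_le_compat_r; [left; apply Rinv_0_lt_compat; lra| exact Hx].
Qed.

Lemma part1 (g : R -> R) : (forall x, continuous g x) -> (exists M, forall x, Rabs (g x) <= M) ->
  is_lim_seq (fun n => expect_scaled n g) (Finite (RInt (fun y => g y * fY y) 0 1)).
Proof.
  intros Hc [M HM].
  assert (HM0 : 0 <= M) by (pose proof (HM 0); pose proof (Rabs_pos (g 0)); lra).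
  assert (HI : RInt (fun y => g y * fY y) 0 1 = RInt (phi g) 0 1).
  { apply RInt_ext. intros x Hx. rewrite Rmin_left, Rmax_right in Hx by lra. unfold fY, phi.
    destruct (Rle_dec 0 x); [|lra]. destruct (Rle_dec x 1); [reflexivity|lra]. }
  rewrite HI. set (I := RInt (phi g) 0 1).
  assert (Hphi : forall x, continuous (phi g) x).
  { intros x. unfold phi. apply (@continuous_mult R_UniformSpace R_AbsRing g (fun y => 2 * (1 - y))). apply Hc.
    apply (@ex_derive_continuous R_AbsRing R_NormedModule). auto_derive. auto. }
  pose proof (riemann_lim (phi g) Hphi) as HR. fold I in HR.
  assert (HRs : is_lim_seq (Rs g) I).
  { apply is_lim_seq_spec. intros eps. apply is_lim_seq_spec in HR. destruct (HR eps) as [N0 HN0].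
    exists (S N0). intros n Hn.
    assert (Hn1 : (1 <= n)%nat) by lia.
    specialize (HN0 (Kn n) ltac:(unfold Kn; lia)).
    unfold Rs, xj. rewrite <- (Kn_INR n Hn1). exact HN0. }
  assert (HG : is_lim_seq (fun n => 2 * Gs g n / INR (2 * n) ^ 2) 0).
  { apply L2. intros eps He. destruct (L1 M eps He) as [N0 HN0]. exists (S N0). intros n Hn.
    assert (Hn1 : (1 <= n)%nat) by lia. specialize (HN0 n ltac:(lia)).
    assert (HGb : Rabs (Gs g n) <= M * INR (2 * n)).
    { unfold Gs. rewrite <- (Kn_INR n Hn1). apply sum_abs_bound. intros; apply HM. }
    pose proof (N_pos n Hn1) as HNp.
    eapply Rle_trans. apply abs_div_le. apply pow_lt; lra.
    rewrite Rabs_mult, Rabs_pos_eq by lra. apply Rmult_le_compat_l; [lra| exact HGb].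
    rewrite mult_INR in *. simpl (INR 2) in *.
    replace (2 * (M * ((1 + 1) * INR n)) / ((1 + 1) * INR n) ^ 2) with (M / INR n) by (field; lra).
    exact HN0. }
  assert (Hen : is_lim_seq en 0).
  { apply L2. intros eps He. destruct (en_small eps He) as [N0 HN0]. exists N0. intros n Hn.
    destruct (HN0 n Hn) as [Hn1 Hb]. rewrite Rabs_pos_eq by (apply en_nonneg; auto). exact Hb. }
  assert (HEr : is_lim_seq (fun n => 2 * Ers g n / (Cn n * INR (2 * n) ^ 2)) 0).
  { apply L2. intros eps He.
    destruct (en_small (eps / (M + 1)) ltac:(apply Rdiv_lt_0_compat; lra)) as [N0 HN0].
    exists N0. intros n Hn. destruct (HN0 n Hn) as [Hn1 Hb].
    assert (HErb : Rabs (Ers g n) <= M * Es n).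
    { unfold Ers, Es. eapply Rle_trans; [apply sum_f_R0_triangle|].
      rewrite scal_sum. apply sum_Rle. intros i _.
      rewrite Rabs_mult, (Rabs_pos_eq (Aj n i)) by apply Aj_nonneg.
      rewrite Rmult_comm. apply Rmult_le_compat_l; [apply Aj_nonneg| apply HM]. }
    pose proof (N_pos n Hn1) as HNp. pose proof (Cn_pos n) as HC.
    assert (HD : 0 < Cn n * INR (2 * n) ^ 2) by (apply Rmult_lt_0_compat; [lra| apply pow_lt; lra]).
    eapply Rle_trans. apply abs_div_le. exact HD.
    rewrite Rabs_mult, (Rabs_pos_eq 2) by lra. apply Rmult_le_compat_l; [lra| exact HErb].
    replace (2 * (M * Es n) / (Cn n * INR (2 * n) ^ 2)) with (M * en n) by (unfold en; field; lra).
    pose proof (en_nonneg n Hn1).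
    apply Rle_trans with (M * (eps / (M + 1))). apply Rmult_le_compat_l; lra.
    assert (Hq : M / (M + 1) <= 1).
    { apply Rmult_le_reg_r with (M + 1); [lra|]. unfold Rdiv. rewrite Rmult_assoc, Rinv_l by lra. lra. }
    replace (M * (eps / (M + 1))) with (eps * (M / (M + 1))) by (field; lra).
    assert (0 <= M / (M + 1)) by (apply Rdiv_le_0_compat; lra). nra. }
  assert (HN : is_lim_seq (fun n => (INR (2 * n) + 1) / INR (2 * n)) 1).
  { apply is_lim_seq_spec. intros eps.
    destruct (L1 (1/2) (eps / 2) ltac:(pose proof (cond_pos eps); lra)) as [N0 HN0].
    exists (S N0). intros n Hn. assert (Hn1 : (1 <= n)%nat) by lia. specialize (HN0 n ltac:(lia)).
    pose proof (N_pos n Hn1) as HNp.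
    replace ((INR (2 * n) + 1) / INR (2 * n) - 1) with (1 / 2 / INR n)
      by (rewrite mult_INR; simpl (INR 2); rewrite mult_INR in HNp; simpl (INR 2) in HNp; field; lra).
    rewrite Rabs_pos_eq. pose proof (cond_pos eps); lra.
    rewrite mult_INR in HNp; simpl (INR 2) in HNp. apply Rdiv_le_0_compat; lra. }
  assert (Hu : is_lim_seq (fun n => Rs g n + 2 * Gs g n / INR (2 * n) ^ 2 - 2 * Ers g n / (Cn n * INR (2 * n) ^ 2)) (I + 0 - 0)).
  { apply is_lim_seq_minus'; [apply is_lim_seq_plus'|]; auto. }
  assert (Hv : is_lim_seq (fun n => (INR (2 * n) + 1) / INR (2 * n) - en n) (1 - 0)).
  { apply is_lim_seq_minus'; auto. }
  pose proof (is_lim_seq_div' _ _ _ _ Hu Hv ltac:(lra)) as Hd.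
  assert (Hq : @eq R ((I + 0 - 0) / (1 - 0)) I) by field.
  rewrite Hq in Hd.
  eapply is_lim_seq_ext_loc; [|exact Hd].
  exists 1%nat. intros n Hn. rewrite (expect_eq g n Hn).
  pose proof (N_pos n Hn) as HNp. pose proof (Cn_pos n) as HC.
  unfold en.
  set (N := INR (2 * n)) in *. set (C := Cn n) in *.
  set (a := C * N ^ 2 / 4).
  assert (Ha : a <> 0) by (unfold a; apply Rgt_not_eq; apply Rmult_lt_0_compat; [apply Rmult_lt_0_compat; [lra| apply pow_lt; lra]|lra]).
  set (u := Rs g n + 2 * Gs g n / N ^ 2 - 2 * Ers g n / (C * N ^ 2)).
  set (v := (N + 1) / N - 2 * Es n / (C * N ^ 2)).
  assert (E1 : a * Rs g n + C / 2 * Gs g n - Ers g n / 2 = a * u) by (unfold a, u; field; lra).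
  assert (E2 : C / 2 * (N * (N + 1) / 2) - Es n / 2 = a * v) by (unfold a, v; field; lra).
  rewrite E1, E2. unfold Rdiv. rewrite Rinv_mult. set (iv := / v). field. exact Ha.
Qed.

Definition cl (y : R) := (Rabs y - Rabs (y - 1) + 1) / 2.

Lemma cl_id y : 0 <= y <= 1 -> cl y = y.
Proof. intros H. unfold cl. rewrite Rabs_pos_eq by lra. rewrite Rabs_left1 by lra. field. Qed.

Lemma cl_bound y : 0 <= cl y <= 1.
Proof. unfold cl, Rabs. destruct (Rcase_abs y); destruct (Rcase_abs (y - 1)); split; lra. Qed.

Lemma cl_cont x : continuous cl x.
Proof.
  unfold cl.
  apply (@continuous_mult R_UniformSpace R_AbsRing (fun y => Rabs y - Rabs (y - 1) + 1) (fun _ => / 2)).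
  - apply (@continuous_plus R_UniformSpace R_AbsRing R_NormedModule (fun y => Rabs y - Rabs (y - 1)) (fun _ => 1)).
    + apply (@continuous_minus R_UniformSpace R_AbsRing R_NormedModule (fun y => Rabs y) (fun y => Rabs (y - 1))).
      * apply continuous_Rabs.
      * apply (continuous_Rabs_comp (fun y => y - 1)).
        apply (@continuous_minus R_UniformSpace R_AbsRing R_NormedModule (fun y => y) (fun _ => 1)).
        apply continuous_id. apply continuous_const.
    + apply continuous_const.
  - apply continuous_const.
Qed.

Lemma frac_01 m N : (m <= N)%nat -> 0 <= INR m / INR N <= 1.
Proof.
  intros H. destruct N as [|N].
  - assert (m = 0%nat) by lia; subst. rewrite INR_0. unfold Rdiv. rewrite Rmult_0_l. lra.
  - assert (HN : 0 < INR (S N)) by (apply lt_0_INR; lia).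
    assert (Hm : INR m <= INR (S N)) by (apply le_INR; lia).
    pose proof (pos_INR m). split.
    + apply Rdiv_le_0_compat; lra.
    + apply Rmult_le_reg_r with (INR (S N)); [lra|]. unfold Rdiv. rewrite Rmult_assoc, Rinv_l by lra. lra.
Qed.

Lemma moment_val r : RInt (fun y => y ^ r * fY y) 0 1 = 2 / ((INR r + 1) * (INR r + 2)).
Proof.
  rewrite (RInt_ext _ (fun y => y ^ r * (2 * (1 - y)))).
  2:{ intros x Hx. rewrite Rmin_left, Rmax_right in Hx by lra. unfold fY.
      destruct (Rle_dec 0 x); [|lra]. destruct (Rle_dec x 1); [reflexivity|lra]. }
  apply is_RInt_unique.
  assert (Hr1 : INR r + 1 <> 0) by (pose proof (pos_INR r); lra).
  assert (Hr2 : INR r + 2 <> 0) by (pose proof (pos_INR r); lra).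
  set (F := fun y => 2 * (y ^ (S r) / (INR r + 1) - y ^ (S (S r)) / (INR r + 2))).
  assert (HF : is_RInt (fun y => y ^ r * (2 * (1 - y))) 0 1 (minus (F 1) (F 0))).
  { apply (@is_RInt_derive R_CompleteNormedModule F).
    - intros x _. unfold F. auto_derive. auto.
      change (match r with 0%nat => 1 | S _ => INR r + 1 end) with (INR (S r)). rewrite S_INR. field. split; auto.
    - intros x _. apply (@ex_derive_continuous R_AbsRing R_NormedModule). auto_derive. auto. }
  replace (2 / ((INR r + 1) * (INR r + 2))) with (minus (F 1) (F 0)).
  exact HF.
  unfold minus, plus, opp, F; simpl. rewrite !pow1. field. split; auto.
Qed.

Lemma part2 r : is_lim_seq (fun n => expect_scaled n (fun y => y ^ r))
                 (Finite (RInt (fun y => y ^ r * fY y) 0 1)).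
Proof.
  set (gr := fun y => cl y ^ r).
  assert (Hc : forall x, continuous gr x).
  { intros x. unfold gr. apply (continuous_comp cl (fun z => z ^ r)). apply cl_cont.
    apply (@ex_derive_continuous R_AbsRing R_NormedModule). auto_derive. auto. }
  assert (Hb : exists M, forall x, Rabs (gr x) <= M).
  { exists 1. intros x. unfold gr. pose proof (cl_bound x).
    rewrite Rabs_pos_eq by (apply pow_le; lra). rewrite <- (pow1 r). apply pow_incr. lra. }
  pose proof (part1 gr Hc Hb) as H.
  assert (HI : RInt (fun y => gr y * fY y) 0 1 = RInt (fun y => y ^ r * fY y) 0 1).
  { apply RInt_ext. intros x Hx. rewrite Rmin_left, Rmax_right in Hx by lra. unfold gr. rewrite cl_id by lra. reflexivity. }
  rewrite HI in H.
  eapply is_lim_seq_ext; [|exact H].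
  intros n. unfold expect_scaled. apply sum_eq. intros m Hm. unfold gr. rewrite cl_id. reflexivity.
  apply frac_01. exact Hm.
Qed.


Theorem theorem18 :
  (* convergence in law: E g(Y_n/(2n)) -> E g(Y) for all bounded continuous g *)
  (forall g : R -> R,
      (forall x, continuous g x) -> (exists M, forall x, Rabs (g x) <= M) ->
      is_lim_seq (fun n => expect_scaled n g)
                 (Finite (RInt (fun y => g y * fY y) 0 1)))
  /\
  (* convergence of all moments, and value of the moments of Y *)
  (forall r : nat,
      is_lim_seq (fun n => expect_scaled n (fun y => y ^ r))
                 (Finite (RInt (fun y => y ^ r * fY y) 0 1))
      /\ RInt (fun y => y ^ r * fY y) 0 1 = 2 / ((INR r + 1) * (INR r + 2))).
Proof.
  split.
  - exact part1.
  - intros r. split; [apply part2| apply moment_val].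
Qed.
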